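(* For each $\kappa>0$ there exists a constant $D_{\min}(\kappa)$ such that for all $D<D_{\min}(\kappa)$ (with $D>0$) one has $\inf_{\varphi\in W^{1,2}(\mathbb{T})}\mathcal J(\varphi)<-\kappa^2/2$.
   Context: $\mathbb{T}=[0,1]$ with endpoints identified; $D>0,\kappa>0$; $$\mathcal J(u)=\frac D2\int_0^1|u_x|^2dx+\frac12\int_0^1u^2dx-\kappa\log\Big(\int_0^1e^udx\Big),\qquad u\in W^{1,2}(\mathbb{T}).$$ Note that $\mathcal J(\kappa)=-\kappa^2/2$ for the constant function $\kappa$. *)

(* Defs.v *)
From HB Require Import structures.
From mathcomp Require Import all_boot all_order all_algebra.
From mathcomp Require Import all_classical all_reals all_analysis.
Set Implicit Arguments. Unset Strict Implicit. Unset Printing Implicit Defensive.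
Import Order.TTheory GRing.Theory Num.Theory.
Import numFieldNormedType.Exports.
Local Open Scope classical_set_scope.
Local Open Scope ring_scope.

Section Defs.
Variable R : realType.
Local Notation mu := (@lebesgue_measure R).

(* W^{1,2}(T), T = [0,1] with endpoints identified, in its 1-d description:
   u (on [0,1]) is an absolutely continuous function
   u(x) = u(0) + \int_0^x g with weak derivative g in L^2(0,1), and
   periodicity u(1) = u(0), i.e. \int_0^1 g = 0.
   [W12 u g] means: u is in W^{1,2}(T) and g is (a representative of) u_x. *)
Definition W12 (u g : R -> R) : Prop :=
  [/\ measurable_fun (`[0%R, 1%R] : set R) g,
      (\int[mu]_(x in (`[0%R, 1%R] : set R)) ((g x) ^+ 2)%:E < +oo)%E,
      Rintegral mu (`[0%R, 1%R] : set R) g = 0 &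
      forall x, 0 <= x <= 1 -> u x = u 0 + Rintegral mu (`[0%R, x] : set R) g ].

Definition Jfun (D kappa : R) (u g : R -> R) : R :=
  D / 2 * Rintegral mu (`[0%R, 1%R] : set R) (fun x => g x ^+ 2)
  + 1 / 2 * Rintegral mu (`[0%R, 1%R] : set R) (fun x => u x ^+ 2)
  - kappa * ln (Rintegral mu (`[0%R, 1%R] : set R) (fun x => expR (u x))).

Definition infJ (D kappa : R) : \bar R :=
  ereal_inf [set (Jfun D kappa p.1 p.2)%:E | p in [set p | W12 p.1 p.2]].

End Defs.

(* Main.v *)
Require Import Defs.
From HB Require Import structures.
From mathcomp Require Import all_boot all_order all_algebra.
From mathcomp Require Import all_classical all_reals all_analysis.
From mathcomp Require Import ring lra.
Import Order.TTheory GRing.Theory Num.Theory.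
Import numFieldNormedType.Exports.
Local Open Scope classical_set_scope.
Local Open Scope ring_scope.

Section H.
Variable R : realType.
Local Notation mu := (@lebesgue_measure R).

Lemma ftcR (f F : R -> R) (a b : R) : a < b ->
  (forall x, is_derive x (1:R) F (f x)) -> continuous f ->
  Rintegral mu `[a, b] f = F b - F a.
Proof.
move=> ab dF cf.
have cF : continuous F.
  move=> x; apply: differentiable_continuous; apply/derivable1_diffP.
  exact: ex_derive.
rewrite /Rintegral (@continuous_FTC2 _ f F a b ab) //.
- by apply: continuous_subspaceT.
- split.
  + by move=> x _; exact: ex_derive.
  + by apply: cvg_at_right_filter; exact: cF.
  + by apply: cvg_at_left_filter; exact: cF.
- by move=> x _; rewrite derive1E derive_val.
Qed.

Lemma ftc_poly (p : {poly R}) a b : a < b ->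
  Rintegral mu `[a, b] (horner p^`()) = p.[b] - p.[a].
Proof.
move=> ab; apply: ftcR => //; exact: continuous_horner.
Qed.

Lemma intL (c d : R) k :
  Rintegral mu `[0, 1] (fun x => c + d * (x * 2 - 1) ^+ (2 * k)) =
  c + d / (2 * k + 1)%:R.
Proof.
pose T : {poly R} := 'X *+ 2 - 1.
pose p : {poly R} := c *: 'X + (d / (2 * (2 * k + 1))%:R) *: T ^+ (2 * k + 1).
have hT x : T.[x] = x * 2 - 1.
  by rewrite /T !hornerE; ring.
have dT : T^`() = 2%:P.
  by rewrite /T derivB derivMn derivX -polyC1 derivC subr0 polyC_natr.
have hp x : p^`().[x] = c + d * (x * 2 - 1) ^+ (2 * k).
  rewrite /p derivD !derivZ derivX deriv_exp dT addn1 /=.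
  rewrite !hornerE hornerMn hornerM hornerC horner_exp hT -mulr_natr natrM.
  field; have k0 : (0:R) <= k%:R by []; by apply/eqP; lra.
transitivity (Rintegral mu `[0, 1] (horner p^`())).
  by apply: eq_Rintegral => x _; exact: (esym (hp x)).
rewrite ftc_poly ?ltr01 // /p !hornerE. rewrite addrK expr1n exprD expr1 exprM sqrrN !expr1n natrM.
by field; have k0 : (0:R) <= k%:R by []; apply/eqP; lra.
Qed.
End H.

Section Key.
Variable R : realType.
Local Notation mu := (@lebesgue_measure R).
Variables (kappa b : R) (m : nat).
Hypotheses (k0 : 0 < kappa) (b0 : 0 <= b).

Definition T : {poly R} := 'X *+ 2 - 1.
Definition Pp : {poly R} := 1 + (b ^+ 2)%:P * T ^+ (2 * (2 * m)).
Definition u x := kappa + ln Pp.[x].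
Definition g x := Pp^`().[x] / Pp.[x].

Lemma even_ge0 (y : R) j : 0 <= y ^+ (2 * j).
Proof. by rewrite exprM exprn_ge0 // sqr_ge0. Qed.

Lemma hP x : Pp.[x] = 1 + b ^+ 2 * (x * 2 - 1) ^+ (2 * (2 * m)).
Proof. by rewrite /Pp /T !hornerE mulr_natr mulr2n. Qed.

Lemma Ppos x : 0 < Pp.[x].
Proof.
rewrite hP; apply: (@lt_le_trans _ _ 1) => //.
by rewrite lerDl mulr_ge0 // ?sqr_ge0 // even_ge0.
Qed.

Lemma du x : is_derive x (1:R) u (g x).
Proof.
have h1 : is_derive x (1:R) (@ln R \o horner Pp) (Pp.[x]^-1 * Pp^`().[x]).
  exact: (is_derive1_comp (is_derive1_ln (Ppos x)) (is_derive_poly _ _)).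
have := is_deriveD (is_derive_cst kappa x 1) h1.
rewrite add0r /g mulrC; exact.
Qed.

Lemma cu : continuous u.
Proof.
move=> x; apply: differentiable_continuous; apply/derivable1_diffP.
by case: (du x).
Qed.

Lemma cg : continuous g.
Proof.
move=> x; apply: continuousM; first exact: continuous_horner.
apply: continuousV; first by rewrite gt_eqF // Ppos.
exact: continuous_horner.
Qed.


Lemma hT1 : (1 * 2 - 1 : R) = 1. Proof. by ring. Qed.
Lemma hT0 : (0 * 2 - 1 : R) = -1. Proof. by ring. Qed.

Lemma W12ug : W12 u g.
Proof.
have mg : measurable_fun setT g := measurable_realfun.continuous_measurable_fun cg.
split.
- exact: measurable_funS mg.
- have cg2 : continuous (fun x => g x ^+ 2).
    by move=> x; apply: (continuousM (cg x) (cg x)).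
  have /integrableP[_ H] := @continuous_compact_integrable R
    (fun x => g x ^+ 2) `[0, 1] (@segment_compact R 0 1) (continuous_subspaceT cg2).
  apply: le_lt_trans H; rewrite le_eqVlt; apply/orP; left; apply/eqP.
  by apply: eq_integral => x _ /=; rewrite ger0_norm // sqr_ge0.
- rewrite (@ftcR R _ _ _ _ ltr01 du cg) /u !hP hT1 hT0 expr1n exprM sqrrN !expr1n.
  by rewrite subrr.
- move=> x /andP[x0 x1]; case: (eqVneq x 0) => [->|xn0].
    by rewrite set_itv1 Rintegral_set1 addr0.
  have xp : 0 < x by rewrite lt_neqAle eq_sym xn0 x0.
  by rewrite (@ftcR R _ _ _ _ xp du cg) addrC subrK.
Qed.


Definition L := ln (1 + b ^+ 2).

Lemma cont_cd (c d : R) n : continuous (fun x : R => c + d * (x * 2 - 1) ^+ n).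
Proof.
have -> : (fun x : R => c + d * (x * 2 - 1) ^+ n) = horner (c%:P + d%:P * T ^+ n).
  by apply/funext => y; rewrite /T !hornerE mulr_natr mulr2n.
exact: continuous_horner.
Qed.

Lemma int_exp : Rintegral mu `[0, 1] (fun x => expR (u x)) =
  expR kappa * (1 + b ^+ 2 / (2 * (2 * m) + 1)%:R).
Proof.
transitivity (Rintegral mu `[0, 1] (fun x => expR kappa +
   (expR kappa * b ^+ 2) * (x * 2 - 1) ^+ (2 * (2 * m)))).
  by apply: eq_Rintegral => x _; rewrite /u expRD lnK ?posrE ?Ppos // hP; ring.
by rewrite intL mulrDr mulr1 mulrA.
Qed.

Lemma pt_u2 x : 0 <= x <= 1 ->
  u x ^+ 2 <= kappa ^+ 2 + ((2 * kappa + L) * (2 * b)) * (x * 2 - 1) ^+ (2 * m).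
Proof.
move=> /andP[x0 x1].
set w := (x * 2 - 1) ^+ (2 * m).
have w0 : 0 <= w by exact: even_ge0.
have ew : (x * 2 - 1) ^+ (2 * (2 * m)) = w ^+ 2.
  by rewrite /w -exprM [(2 * m * 2)%N]mulnC.
have w1 : w ^+ 2 <= 1.
  rewrite -ew exprM; apply: exprn_ile1; first exact: sqr_ge0.
  rewrite expr2; nra.
set z := b * w.
have z0 : 0 <= z by rewrite mulr_ge0.
have hPz : Pp.[x] = 1 + z ^+ 2 by rewrite hP ew /z exprMn.
set v := ln Pp.[x].
have v0 : 0 <= v by rewrite /v ln_ge0 // hPz lerDl sqr_ge0.
have vL : v <= L.
  rewrite /v /L ler_ln ?posrE ?Ppos //; last first.
    by apply: (@lt_le_trans _ _ 1) => //; rewrite lerDl sqr_ge0.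
  by rewrite hPz lerD2l /z exprMn ler_piMr // sqr_ge0.
have v2z : v <= 2 * z.
  rewrite /v -ler_expR lnK ?posrE ?Ppos // hPz.
  have e := expR_ge1Dx z.
  have -> : 2 * z = z + z by ring.
  rewrite expRD; nra.
have -> : (2 * kappa + L) * (2 * b) * w = (2 * kappa + L) * (2 * z) by rewrite /z; ring.
rewrite /u -/v.
have h1 : 0 <= v * (L - v) by rewrite mulr_ge0 // subr_ge0.
have h2 : 0 <= (2 * kappa + L) * (2 * z - v).
  apply: mulr_ge0; last by rewrite subr_ge0.
  apply: addr_ge0; [apply: mulr_ge0 => //; exact: ltW | exact: le_trans v0 vL].
nra.
Qed.

Lemma int_u2 : Rintegral mu `[0, 1] (fun x => u x ^+ 2) <=
  kappa ^+ 2 + (2 * kappa + L) * (2 * b) / (2 * m + 1)%:R.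
Proof.
rewrite -intL; apply: le_Rintegral => //.
- apply: continuous_compact_integrable; first exact: (@segment_compact R 0 1).
  apply: continuous_subspaceT => x; exact: (continuousM (cu x) (cu x)).
- apply: continuous_compact_integrable; first exact: (@segment_compact R 0 1).
  apply: continuous_subspaceT; exact: cont_cd.
- move=> x /=; rewrite in_itv /=; exact: pt_u2.
Qed.

Lemma Jbound D : Jfun D kappa u g <=
  D / 2 * Rintegral mu `[0, 1] (fun x => g x ^+ 2)
  + 1 / 2 * (kappa ^+ 2 + (2 * kappa + L) * (2 * b) / (2 * m + 1)%:R)
  - kappa * (kappa + ln (1 + b ^+ 2 / (2 * (2 * m) + 1)%:R)).
Proof.
have q0 : 0 < 1 + b ^+ 2 / (2 * (2 * m) + 1)%:R.
  by apply: (@lt_le_trans _ _ 1) => //; rewrite lerDl divr_ge0 // sqr_ge0.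
rewrite /Jfun int_exp lnM ?posrE ?expR_gt0 // expRK.
have := int_u2; lra.
Qed.

End Key.

Lemma param (R : realType) (kappa : R) : 0 < kappa ->
  exists (b : R) (m : nat), 0 <= b /\
   0 < kappa * ln (1 + b ^+ 2 / (2 * (2 * m) + 1)%:R)
       - 1 / 2 * ((2 * kappa + @L R b) * (2 * b) / (2 * m + 1)%:R).
Proof.
move=> k0.
set C0 := 1 + 2 / kappa.
set N := (Num.Def.trunc (5 * expR C0)).+1.
set r : R := N%:R.
have rgt : 5 * expR C0 < r := truncnS_gt _.
have eC : 0 < expR C0 := expR_gt0 _.
have r1 : 1 <= r by rewrite /r /N ler1n.
exists (r ^+ 2), (N ^ 3)%N; split; first exact: sqr_ge0.
have n1 : (2 * (N ^ 3) + 1)%:R = 2 * r ^+ 3 + 1 :> R.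
  by rewrite natrD natrM (@natrX R N 3).
have n2 : (2 * (2 * (N ^ 3)) + 1)%:R = 4 * r ^+ 3 + 1 :> R.
  by rewrite natrD natrM natrM (@natrX R N 3); ring.
rewrite n1 n2.
have r3 : r <= r ^+ 3.
  have : 1 <= r ^+ 2 by rewrite expr_ge1 // (le_trans ler01).
  rewrite [r ^+ 3]exprS => h; rewrite -{1}(mulr1 r) ler_pM2l //; lra.
have Lb : @L R (r ^+ 2) <= 4 * r.
  rewrite /L -ler_expR lnK ?posrE; last first.
    by apply: (@lt_le_trans _ _ 1) => //; rewrite lerDl sqr_ge0.
  rewrite expRM_natl.
  have e := expR_ge1Dx r.
  apply: (@le_trans _ _ ((1 + r) ^+ 4)).
    rewrite -exprM /=; have r0 : 0 <= r by lra.
    have -> : (1 + r) ^+ 4 = 1 + 4 * r + 6 * r ^+ 2 + 4 * r ^+ 3 + r ^+ 4 by ring.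
    have : 0 <= r ^+ 2 by exact: sqr_ge0.
    have : 0 <= r ^+ 3 by exact: exprn_ge0.
    lra.
  apply: lerXn2r => //; rewrite nnegrE; lra.
have L0 : 0 <= @L R (r ^+ 2) by rewrite /L ln_ge0 // lerDl sqr_ge0.
have hA : (2 * kappa + @L R (r ^+ 2)) * (2 * r ^+ 2) / (2 * r ^+ 3 + 1) <= 2 * (kappa + 2).
  have p3 : 0 < 2 * r ^+ 3 + 1 by have := exprn_ge0 3 (le_trans ler01 r1); lra.
  rewrite ler_pdivrMr //.
  have h1 : (2 * kappa + @L R (r ^+ 2)) * (2 * r ^+ 2) <= (2 * kappa + 4 * r) * (2 * r ^+ 2).
    by rewrite ler_pM2r ?lerD2l // mulr_gt0 // exprn_gt0 // (lt_le_trans ltr01).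
  apply: (le_trans h1).
  have r2 : r ^+ 2 <= r ^+ 3 by rewrite [r ^+ 3]exprS ler_peMl ?sqr_ge0.
  have -> : r ^+ 3 = r * r ^+ 2 by rewrite exprS.
  have : 0 <= r ^+ 2 by exact: sqr_ge0.
  nra.
have hQ : expR C0 < 1 + r ^+ 2 ^+ 2 / (4 * r ^+ 3 + 1).
  have p3 : 0 < 4 * r ^+ 3 + 1 by have := exprn_ge0 3 (le_trans ler01 r1); lra.
  have : r / 5 <= r ^+ 2 ^+ 2 / (4 * r ^+ 3 + 1).
    rewrite ler_pdivlMr // mulrAC ler_pdivrMr //.
    have -> : r ^+ 2 ^+ 2 = r * r ^+ 3 by rewrite -exprM -exprS.
    have : 0 <= r ^+ 3 by exact: exprn_ge0 (le_trans ler01 r1).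
    nra.
  lra.
have hln : C0 < ln (1 + r ^+ 2 ^+ 2 / (4 * r ^+ 3 + 1)).
  rewrite -ltr_expR lnK // posrE; apply: lt_trans hQ; exact: expR_gt0.
have kC : kappa * C0 = kappa + 2 by rewrite /C0; field; rewrite gt_eqF.
have : kappa * C0 < kappa * ln (1 + r ^+ 2 ^+ 2 / (4 * r ^+ 3 + 1)).
  by rewrite ltr_pM2l.
lra.
Qed.

Theorem mainTheorem4 (R : realType) (kappa : R) :
  0 < kappa ->
  exists Dmin : R, 0 < Dmin /\
    forall D : R, 0 < D -> D < Dmin ->
      (infJ D kappa < (- (kappa ^+ 2 / 2))%:E)%E.
Proof.
move=> k0.
have [b [m [b0 eps0]]] := @param R kappa k0.
move: eps0.
set Q := ln (1 + b ^+ 2 / (2 * (2 * m) + 1)%:R).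
set A := (2 * kappa + @L R b) * (2 * b) / (2 * m + 1)%:R.
move=> eps0.
set G := Rintegral (@lebesgue_measure R) `[0, 1] (fun x => g R b m x ^+ 2).
have G0 : 0 <= G by apply: Rintegral_ge0 => x _; exact: sqr_ge0.
have G1 : 0 < G + 1 by lra.
exists ((kappa * Q - 1 / 2 * A) / (G + 1)); split; first by rewrite divr_gt0.
move=> D D0 DD.
apply: (@le_lt_trans _ _ (Jfun D kappa (u R kappa b m) (g R b m))%:E).
  apply: ereal_inf_lbound; exists (u R kappa b m, g R b m) => //.
  exact: W12ug.
rewrite lte_fin.
have J := @Jbound R kappa b m k0 b0 D.
rewrite -/Q -/A -/G in J.
move: DD; rewrite ltr_pdivlMr // => DD.
have DG : 0 <= D * G by rewrite mulr_ge0 // ltW.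
lra.
Qed.
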